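(* Let $d\ge 2$, set $b:=2^d$ and $Q:=[0,1]^d$, and let $(x_n)_{n\ge1}\subset Q$ be the dyadic digital sequence defined below. For every $N\in\mathbb{N}$ there exist pairwise disjoint Borel sets $A_1,\dots,A_N\subset Q$ such that \[ \lambda_d(A_n)=\frac1N,\qquad A_n\subset B\bigl(x_n,6\sqrt d\,N^{-1/d}\bigr)\qquad(1\le n\le N), \] and $\lambda_d\bigl(Q\setminus\bigcup_{n=1}^N A_n\bigr)=0$.
   Context: $\lambda_d$ denotes Lebesgue measure on $Q=[0,1]^d$ (a probability measure), and $B(x,r)$ is the closed Euclidean ball of radius $r$ centred at $x$. Dyadic digital sequence: for $a\in\{0,1,\dots,b-1\}$ write $a=\sum_{j=1}^d\varepsilon_j(a)2^{j-1}$ with $\varepsilon_j(a)\in\{0,1\}$; for an integer $m\ge0$ write its base-$b$ expansion $m=\sum_{k\ge0}a_k(m)b^k$ with $a_k(m)\in\{0,\dots,b-1\}$, all but finitely many zero. Then \[ x_n:=\Bigl(\sum_{k=0}^\infty\varepsilon_1(a_k(n-1))2^{-(k+1)},\ \dots,\ \sum_{k=0}^\infty\varepsilon_d(a_k(n-1))2^{-(k+1)}\Bigr),\qquad n\ge1. \] *)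

(* Defs.v *)
From HB Require Import structures.
From mathcomp Require Import all_boot all_order all_algebra.
From mathcomp Require Import all_classical all_reals all_analysis.
Set Implicit Arguments. Unset Strict Implicit. Unset Printing Implicit Defensive.
Import Order.TTheory GRing.Theory Num.Theory.
Local Open Scope classical_set_scope.
Local Open Scope ring_scope.

(* Points of R^d are d-tuples of reals; the measurable sets on d.-tuple R are
   the sigma-algebra generated by the coordinate maps, i.e. the Borel sets of R^d. *)

Definition cube (R : realType) (d : nat) : set (d.-tuple R) :=
  [set x | forall i : 'I_d, 0 <= tnth x i <= 1].

Arguments cube : clear implicits.

Definition cball (R : realType) (d : nat) (c : d.-tuple R) (r : R) : set (d.-tuple R) :=
  [set x | Num.sqrt (\sum_(i < d) (tnth x i - tnth c i) ^+ 2) <= r].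

Definition box (R : realType) (d : nat) (a b : 'I_d -> R) : set (d.-tuple R) :=
  [set x | forall i : 'I_d, a i <= tnth x i <= b i].

(* mu is d-dimensional Lebesgue measure (on Borel sets): it gives every box its
   volume.  By the pi-lambda uniqueness theorem this determines mu uniquely. *)
Definition is_lebesgue_d (R : realType) (d : nat)
    (mu : {measure set (d.-tuple R) -> \bar R}) : Prop :=
  forall a b : 'I_d -> R, (forall i, a i <= b i) ->
    mu (box a b) = (\prod_(i < d) (b i - a i))%:E.

Definition digit (d m k : nat) : nat := (m %/ (2 ^ d) ^ k) %% (2 ^ d).

(* eps_j(a) for j = i+1 : the (j-1)-th binary digit of a *)
Definition eps (i : nat) (a : nat) : bool := odd (a %/ 2 ^ i).

(* The dyadic digital sequence x_n, n >= 1 (coordinate j = i+1).  Digits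
   a_k(n-1) vanish for k >= n-1, so the series is the finite sum over k < n. *)
Definition digital_seq (R : realType) (d n : nat) : d.-tuple R :=
  [tuple of [seq \sum_(k < n) (eps i (digit d n.-1 k))%:R / 2%:R ^+ k.+1
            | i <- iota 0 d]].
Arguments digital_seq : clear implicits.

(* Main.v *)
Require Import Defs.
From HB Require Import structures.
From mathcomp Require Import all_boot all_order all_algebra.
From mathcomp Require Import all_classical all_reals all_analysis.
From mathcomp Require Import zify ring lra.
Import Order.TTheory GRing.Theory Num.Theory.
Set Implicit Arguments. Unset Strict Implicit. Unset Printing Implicit Defensive.

(* Proof strategy: a kd-tree ("ham-sandwich by halving") partition of [0,1)^d
   following the binary digits of the point indices; each cell is a half-open
   box of volume 1/N lying close to the dyadic box containing the point. *)


Definition bit (j m : nat) : bool := odd (m %/ 2 ^ j).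

Fixpoint cntm (N m l : nat) : nat :=
  match l with
  | 0 => N
  | l'.+1 => if bit l' m then (cntm N m l')./2 else uphalf (cntm N m l')
  end.

Lemma mod2S (m l : nat) : m %% 2 ^ l.+1 = m %% 2 ^ l + bit l m * 2 ^ l.
Proof.
rewrite /bit; set p := 2 ^ l; have p0 : 0 < p by rewrite expn_gt0.
rewrite expnS mulnC -/p.
have E : m = (m %/ p)./2 * (p * 2) + (odd (m %/ p) * p + m %% p).
  have e1 := divn_eq m p.
  have e2 : m %/ p = odd (m %/ p) + (m %/ p)./2 * 2 by rewrite muln2 odd_double_half.
  move: e1 e2; set q := m %/ p; set r := m %% p; set h := q./2; set o := odd q.
  move=> e1 e2; rewrite {1}e1 {1}e2; ring.
have rp : m %% p < p by rewrite ltn_pmod.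
rewrite {1}E -divn2 modnMDl modn_small; first by rewrite addnC.
by case: (odd (m %/ p)); lia.
Qed.

Lemma bit_small (j m : nat) : m < 2 ^ j -> bit j m = false.
Proof. by move=> h; rewrite /bit divn_small. Qed.

Lemma cntm_inv (N m l : nat) : m < N ->
  N - m %% 2 ^ l <= cntm N m l * 2 ^ l /\ cntm N m l * 2 ^ l < N - m %% 2 ^ l + 2 ^ l.
Proof.
move=> mN; elim: l => [|l [IH1 IH2]].
  by rewrite /= expn0 modn1 subn0 muln1; lia.
have sm : m %% 2 ^ l.+1 <= m by apply: leq_mod.
move: sm; rewrite /= mod2S expnS.
set p := 2 ^ l; set s := m %% p; set C := cntm N m l.
have p0 : 0 < p by rewrite expn_gt0.
have sp : s < p by rewrite ltn_pmod.
have sm : s <= m by apply: leq_mod.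
move: IH1 IH2; rewrite -/p -/s -/C.
have HC : C = odd C + C./2 * 2 by rewrite muln2 odd_double_half.
have HU : uphalf C = odd C + C./2 by rewrite uphalf_half.
case: (bit l m) => /=; rewrite ?HU; move: HC; set x := C./2; set o := odd C.
  case: o => /= -> ; rewrite !mulnDl; nia.
case: o => /= -> ; rewrite ?mulnDl; nia.
Qed.

Lemma cntm_pos (N m l : nat) : m < N -> 0 < cntm N m l.
Proof.
move=> mN; have [h1 h2] := cntm_inv l mN.
have sm : m %% 2 ^ l <= m by apply: leq_mod.
case: (cntm N m l) h1 => //; rewrite mul0n; lia.
Qed.

Lemma cntm_big (N m l : nat) : m < N -> N < (cntm N m l).+1 * 2 ^ l.
Proof.
move=> mN; have [h1 h2] := cntm_inv l mN.
have sp : m %% 2 ^ l < 2 ^ l by rewrite ltn_pmod // expn_gt0.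
rewrite mulSn; lia.
Qed.

Lemma cntm_le1 (N m l : nat) : m < N -> cntm N m l <= 1 -> N < 2 ^ l.+1.
Proof.
move=> mN c1; have [h1 h2] := cntm_inv l mN.
have sp : m %% 2 ^ l < 2 ^ l by rewrite ltn_pmod // expn_gt0.
have : cntm N m l * 2 ^ l <= 2 ^ l by rewrite -{2}(mul1n (2 ^ l)) leq_mul2r c1 orbT.
rewrite expnS; lia.
Qed.

Lemma cntm_ge2 (N m l : nat) : m < N -> 1 < cntm N m l -> 2 ^ l < N.
Proof.
move=> mN c2; have [h1 h2] := cntm_inv l mN.
have : 2 * 2 ^ l <= cntm N m l * 2 ^ l by rewrite leq_mul2r c2 orbT.
have sm : m %% 2 ^ l <= m by apply: leq_mod.
lia.
Qed.

Lemma cntm_N (N m : nat) : m < N -> cntm N m N = 1.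
Proof.
move=> mN; have p := cntm_pos N mN; have [h1 h2] := cntm_inv N mN.
have hN : N < 2 ^ N by apply: ltn_expl.
case E: (cntm N m N) p h2 => [|[|k]] //= _.
rewrite !mulSn; lia.
Qed.

Lemma cntm_agree (N m m' l : nat) :
  (forall j, j < l -> bit j m = bit j m') -> cntm N m l = cntm N m' l.
Proof.
elim: l => [//|l IH] H /=.
rewrite H // IH // => j jl; apply: H; exact: ltnW.
Qed.

Lemma mod_agree (m m' k : nat) :
  (forall j, j < k -> bit j m = bit j m') -> m %% 2 ^ k = m' %% 2 ^ k.
Proof.
elim: k => [|k IH] H; first by rewrite expn0 !modn1.
by rewrite !mod2S IH ?H // => j jk; apply: H; exact: ltnW.
Qed.

Lemma bits_neq (m m' : nat) : m != m' -> exists j, bit j m != bit j m'.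
Proof.
move=> /eqP ne; apply/not_existsP => H; apply: ne.
have k1 : m < 2 ^ (maxn m m') by apply: (leq_ltn_trans (leq_maxl m m')); apply: ltn_expl.
have k2 : m' < 2 ^ (maxn m m') by apply: (leq_ltn_trans (leq_maxr m m')); apply: ltn_expl.
move: k1 k2; set K := maxn m m' => k1 k2.
rewrite -(modn_small k1) -(modn_small k2); apply: mod_agree => j _.
by apply/eqP; apply/negPn/negP => h; apply: (H j).
Qed.


Lemma eps_digit (d m k i : nat) : i < d -> eps i (digit d m k) = bit (k * d + i) m.
Proof.
move=> id; rewrite /eps /digit /bit -expnM (mulnC k d).
set q := m %/ 2 ^ (d * k).
have -> : m %/ 2 ^ (d * k + i) = q %/ 2 ^ i by rewrite expnD divnMA.
have e : 2 ^ d = 2 ^ (d - i) * 2 ^ i by rewrite -expnD subnK // ltnW.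
rewrite {2}(divn_eq q (2 ^ d)).
rewrite [X in q %/ 2 ^ d * X]e mulnA divnMDl ?expn_gt0 //.
rewrite oddD oddM oddX /=.
have -> : (d - i == 0) = false by apply/negbTE; rewrite subn_eq0 -ltnNge.
by rewrite andbF.
Qed.

Local Open Scope classical_set_scope.
Local Open Scope ring_scope.


Definition hbox (R : realType) (d : nat) (a b : 'I_d -> R) : set (d.-tuple R) :=
  [set x | forall i : 'I_d, a i <= tnth x i < b i].

Lemma tuple_pre_meas (R : realType) (d : nat) (i : 'I_d) (Y : set R) :
  measurable Y -> measurable ((fun x : d.-tuple R => tnth x i) @^-1` Y).
Proof.
move=> mY; rewrite -[X in measurable X]setTI.
exact: (@measurable_tnth _ R d i measurableT Y mY).
Qed.

Lemma hbox_measurable (R : realType) (d : nat) (a b : 'I_d -> R) :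
  measurable (hbox a b).
Proof.
have -> : hbox a b = \bigcap_(i in [set: 'I_d])
   ((fun x : d.-tuple R => tnth x i) @^-1` [set` `[a i, b i[%R]).
  apply/seteqP; split => x /=.
    by move=> H i _ /=; rewrite in_itv /= H.
  by move=> H i; have := H i I; rewrite /= in_itv.
apply: fin_bigcap_measurable; first exact: finite_finset.
move=> i _; apply: tuple_pre_meas; exact: measurable_itv.
Qed.

Lemma box_measurable (R : realType) (d : nat) (a b : 'I_d -> R) :
  measurable (box a b).
Proof.
have -> : box a b = \bigcap_(i in [set: 'I_d])
   ((fun x : d.-tuple R => tnth x i) @^-1` [set` `[a i, b i]%R]).
  apply/seteqP; split => x /=.
    by move=> H i _ /=; rewrite in_itv /= H.
  by move=> H i; have := H i I; rewrite /= in_itv.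
apply: fin_bigcap_measurable; first exact: finite_finset.
move=> i _; apply: tuple_pre_meas; exact: measurable_itv.
Qed.


Lemma null_bigU (R : realType) (d : nat) (mu : {measure set (d.-tuple R) -> \bar R})
  (I : Type) (r : seq I) (F : I -> set (d.-tuple R)) :
  (forall i, measurable (F i)) -> (forall i, mu (F i) = 0%E) ->
  mu (\big[setU/set0]_(i <- r) F i) = 0%E.
Proof.
move=> mF F0; elim: r => [|i r IH]; first by rewrite big_nil measure0.
rewrite big_cons; apply/eqP; rewrite -measure_le0.
have h := measureU2 mu (mF i) (@bigsetU_measurable _ _ _ r xpredT F (fun j _ => mF j)).
have h1 : (mu (F i) <= 0)%E by rewrite F0.
have h2 : (mu (\big[setU/set0]_(j <- r) F j) <= 0)%E by rewrite IH.
apply: (le_trans h); rewrite -[leRHS](adde0 0%E); apply: leeD; [exact: h1|exact: h2].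
Qed.

Lemma hbox_measure (R : realType) (d : nat) (mu : {measure set (d.-tuple R) -> \bar R})
  (a b : 'I_d -> R) : is_lebesgue_d mu -> (forall i, a i <= b i) ->
  mu (hbox a b) = (\prod_(i < d) (b i - a i))%:E.
Proof.
move=> Hmu ab.
pose face (i : 'I_d) := box (fun j => if j == i then b i else a j) b.
have mface i : measurable (face i) by apply: box_measurable.
have face0 i : mu (face i) = 0%E.
  rewrite /face Hmu; last by move=> j; case: eqP => [->|]//.
  by rewrite (bigD1 i) //= eqxx subrr mul0r.
have sub : box a b `\` hbox a b `<=` \big[setU/set0]_(i <- enum 'I_d) face i.
  move=> x [/= xb xh].
  have [i Hi] : exists i, ~ (a i <= tnth x i < b i).
    apply/not_existsP => H; apply: xh => i; have := H i.
    by move/contrapT.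
  rewrite -bigcup_seq; exists i; first by rewrite /= mem_enum.
  move=> j; case: eqP => [->|_]; last exact: xb.
  have /andP[h1 h2] := xb i; rewrite h2 andbT.
  have : ~~ (tnth x i < b i) by apply/negP => h; apply: Hi; rewrite h1 h.
  by rewrite -leNgt.
have mDn : mu (box a b `\` hbox a b) = 0%E.
  apply/eqP; rewrite -measure_le0 -(@null_bigU _ _ mu _ (enum 'I_d) _ mface face0).
  apply: le_measure => //; rewrite inE.
    by apply: measurableD; [apply: box_measurable|apply: hbox_measurable].
  by apply: bigsetU_measurable.
have E : mu (box a b) = (mu (box a b `\` hbox a b) + mu (box a b `&` hbox a b))%E
  := measureDI mu (box_measurable a b) (hbox_measurable a b).
move: E; rewrite mDn add0e Hmu //.
have -> : box a b `&` hbox a b = hbox a b.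
  apply/seteqP; split => x; first by case.
  move=> H; split => // i; have /andP[h1 h2] := H i.
  by rewrite h1 (ltW h2).
by move=> <-.
Qed.


Fixpoint bx (R : realType) (d N m l : nat) : ('I_d -> R) * ('I_d -> R) :=
  match l with
  | 0 => (fun _ => 0, fun _ => 1)
  | l'.+1 =>
    let ab := bx R d N m l' in
    let C := cntm N m l' in
    if (1 < C)%N then
      let t := fun i => ab.1 i + (ab.2 i - ab.1 i) * ((uphalf C)%:R / C%:R) in
      if bit l' m then (fun i : 'I_d => if nat_of_ord i == (l' %% d)%N then t i else ab.1 i, ab.2)
      else (ab.1, fun i : 'I_d => if nat_of_ord i == (l' %% d)%N then t i else ab.2 i)
    else ab
  end.

Lemma uphalf_le (C : nat) : (uphalf C <= C)%N.
Proof. by case: C => // C; rewrite uphalf_half /=; case: (odd C) => /=; rewrite ?add0n; lia. Qed.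

Lemma frac_bounds (R : realType) (C : nat) : (0 < C)%N ->
  0 <= (uphalf C)%:R / C%:R :> R /\ (uphalf C)%:R / C%:R <= 1 :> R.
Proof.
move=> C0; split; first by rewrite divr_ge0.
rewrite ler_pdivrMr ?ltr0n // mul1r ler_nat uphalf_le //.
Qed.

Lemma bx_valid (R : realType) (d N m l : nat) (i : 'I_d) :
  0 <= (bx R d N m l).1 i /\ (bx R d N m l).1 i <= (bx R d N m l).2 i /\
  (bx R d N m l).2 i <= 1.
Proof.
elim: l => [|l [IH1 [IH2 IH3]]] /=; first by rewrite lexx ler01.
case: ifP => // C1.
have [f0 f1] := frac_bounds R (ltnW C1).
move: IH1 IH2 IH3 f0 f1; case: (bx R d N m l) => a b /=.
set f := _ / _ => IH1 IH2 IH3 f0 f1.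
have ht1 : a i <= a i + (b i - a i) * f by rewrite lerDl mulr_ge0 // subr_ge0.
have ht2 : a i + (b i - a i) * f <= b i.
  rewrite -lerBrDl; rewrite -[leRHS]mulr1 ler_wpM2l // subr_ge0 //.
case: ifP => _ /=; case: ifP => _ /=; repeat split => //.
all: lra.
Qed.

Lemma bx_mono (R : realType) (d N m l : nat) (i : 'I_d) :
  (bx R d N m l).1 i <= (bx R d N m l.+1).1 i /\
  (bx R d N m l.+1).2 i <= (bx R d N m l).2 i.
Proof.
have [v1 [v2 v3]] := bx_valid R N m l i.
rewrite /=; case: ifP => C1; last by rewrite !lexx.
have [f0 f1] := frac_bounds R (ltnW C1).
move: v1 v2 v3 f0 f1; case: (bx R d N m l) => a b /=.
set f := _ / _ => v1 v2 v3 f0 f1.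
have ht1 : a i <= a i + (b i - a i) * f by rewrite lerDl mulr_ge0 // subr_ge0.
have ht2 : a i + (b i - a i) * f <= b i.
  rewrite -lerBrDl; rewrite -[leRHS]mulr1 ler_wpM2l // subr_ge0 //.
by case: ifP => _ /=; case: ifP => _ /=; rewrite ?lexx.
Qed.

Lemma bx_nested (R : realType) (d N m l k : nat) :
  hbox (bx R d N m (l + k)).1 (bx R d N m (l + k)).2 `<=`
  hbox (bx R d N m l).1 (bx R d N m l).2.
Proof.
elim: k => [|k IH]; first by rewrite addn0.
move=> x Hx; apply: IH => i; have /andP[h1 h2] := Hx i.
have [m1 m2] := bx_mono R N m (l + k) i.
rewrite addnS in h1 h2.
by rewrite (le_trans m1 h1) (lt_le_trans h2 m2).
Qed.

Lemma bx_agree (R : realType) (d N m m' l : nat) :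
  (forall j, (j < l)%N -> bit j m = bit j m') -> bx R d N m l = bx R d N m' l.
Proof.
elim: l => [//|l IH] H /=.
rewrite H // (cntm_agree N (l:=l) (m:=m) (m':=m')); last by move=> j jl; apply: H; exact: ltnW.
by rewrite IH // => j jl; apply: H; exact: ltnW.
Qed.

Lemma cntm_frozen (N m l : nat) : (m < N)%N -> (cntm N m l <= 1)%N ->
  cntm N m l.+1 = cntm N m l.
Proof.
move=> mN c1; have p0 := cntm_pos l mN; have p1 := cntm_pos l.+1 mN.
have e : cntm N m l = 1%N by lia.
move: p1; rewrite /= e; by case: (bit l m).
Qed.

Lemma bx_frozen (R : realType) (d N m l : nat) : (m < N)%N -> (cntm N m l <= 1)%N ->
  forall k, bx R d N m (l + k) = bx R d N m l.
Proof.
move=> mN c1; elim => [|k IH]; first by rewrite addn0.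
have ck : cntm N m (l + k) = cntm N m l.
  elim: k {IH} => [|k IHk]; first by rewrite addn0.
  by rewrite addnS cntm_frozen // IHk.
by rewrite addnS /= ck ltnNge c1 /= IH.
Qed.

Lemma prod_scale1 (R : realType) (d : nat) (i0 : 'I_d) (F F' : 'I_d -> R) (r : R) :
  (forall i, i != i0 -> F' i = F i) -> F' i0 = F i0 * r ->
  \prod_(i < d) F' i = (\prod_(i < d) F i) * r.
Proof.
move=> H H0; rewrite (bigD1 i0) //= [in RHS](bigD1 i0) //= H0.
rewrite (eq_bigr F); last by move=> i /H.
by rewrite -mulrA (mulrC r) mulrA.
Qed.

Lemma bx_vol (R : realType) (d N m l : nat) : (0 < d)%N -> (m < N)%N ->
  \prod_(i < d) ((bx R d N m l).2 i - (bx R d N m l).1 i) = (cntm N m l)%:R / N%:R.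
Proof.
move=> d0 mN; elim: l => [|l IH].
  by rewrite /= big1 ?divff // ?pnatr_eq0 -?lt0n ?(leq_ltn_trans _ mN) // => i _; rewrite subr0.
have [C1|C1] := ltnP 1 (cntm N m l); last first.
  by rewrite (cntm_frozen mN C1) -IH -[l.+1]addn1 bx_frozen.
pose i0 : 'I_d := Ordinal (ltn_pmod l d0).
have Cpos : (0 < cntm N m l)%N by apply: ltnW.
have CR : (cntm N m l)%:R != 0 :> R by rewrite pnatr_eq0 -lt0n.
have HC : cntm N m l = (uphalf (cntm N m l) + (cntm N m l)./2)%N.
  by rewrite uphalf_half -addnA addnn -[in LHS](odd_double_half (cntm N m l)).
move: IH; rewrite /=; rewrite C1.
case: (bx R d N m l) => a b /= IH.
case Eb: (bit l m) => /=.
- rewrite (@prod_scale1 R d i0 (fun i => b i - a i) _ ((cntm N m l)./2%:R / (cntm N m l)%:R)).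
  + have NR : N%:R != 0 :> R by rewrite pnatr_eq0 -lt0n (leq_ltn_trans _ mN).
    by rewrite IH; field; rewrite NR CR.
  + by move=> i /negbTE; rewrite -(inj_eq val_inj) /= => ->.
  + rewrite /= eqxx; move: HC CR; set C := cntm N m l; set U := uphalf C; set h := C./2.
    move=> HC CR; rewrite HC natrD in CR *; by field.
- rewrite (@prod_scale1 R d i0 (fun i => b i - a i) _ ((uphalf (cntm N m l))%:R / (cntm N m l)%:R)).
  + have NR : N%:R != 0 :> R by rewrite pnatr_eq0 -lt0n (leq_ltn_trans _ mN).
    by rewrite IH; field; rewrite NR CR.
  + by move=> i /negbTE; rewrite -(inj_eq val_inj) /= => ->.
  + by rewrite /= eqxx addrC addKr.
Qed.

Lemma bx_disj1 (R : realType) (d N m m' j : nat) : (0 < d)%N ->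
  bx R d N m j = bx R d N m' j -> cntm N m j = cntm N m' j -> (1 < cntm N m j)%N ->
  bit j m = true -> bit j m' = false ->
  hbox (bx R d N m j.+1).1 (bx R d N m j.+1).2 `&`
  hbox (bx R d N m' j.+1).1 (bx R d N m' j.+1).2 = set0.
Proof.
move=> d0 E Ec C1 b1 b2; pose i0 : 'I_d := Ordinal (ltn_pmod j d0).
rewrite /= -Ec -E C1 b1 b2 /=.
apply/seteqP; split => // x [/= H1 H2].
have := H1 i0; have := H2 i0; rewrite /= eqxx.
by move=> /andP[_ h1] /andP[h2 _]; have := lt_le_trans h1 h2; rewrite ltxx.
Qed.

Lemma bx_disj (R : realType) (d N m m' : nat) : (0 < d)%N -> (m < N)%N -> (m' < N)%N ->
  m != m' ->
  hbox (bx R d N m N).1 (bx R d N m N).2 `&`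
  hbox (bx R d N m' N).1 (bx R d N m' N).2 = set0.
Proof.
move=> d0 mN mN' ne.
have exP : exists j, bit j m != bit j m' by apply: bits_neq.
case: (ex_minnP exP) => j Pj minj.
have agree : forall i, (i < j)%N -> bit i m = bit i m'.
  move=> i ij; apply/eqP; apply/negP => /negP h.
  by have := minj i h; rewrite leqNgt ij.
have jN : (j < N)%N.
  rewrite ltnNge; apply/negP => Nj; move: Pj.
  have hN : (N < 2 ^ j)%N by apply: (leq_ltn_trans Nj); apply: ltn_expl.
  by rewrite !bit_small ?(ltn_trans mN) ?(ltn_trans mN').
have E := bx_agree R d N agree.
have Ec := cntm_agree N agree.
have C1 : (1 < cntm N m j)%N.
  have p1 := cntm_pos j.+1 mN; have p2 := cntm_pos j.+1 mN'.
  move: p1 p2 Pj; rewrite /= Ec.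
  case: (bit j m); case: (bit j m') => //= h1 h2 _.
    by move: h1; case: (cntm N m' j) => [|[|k]].
  by move: h2; case: (cntm N m' j) => [|[|k]].
have hsub : forall mm, hbox (bx R d N mm N).1 (bx R d N mm N).2 `<=`
    hbox (bx R d N mm j.+1).1 (bx R d N mm j.+1).2.
  by move=> mm; rewrite -(subnKC jN); apply: bx_nested.
apply/seteqP; split => // x [h1 h2].
move: Pj; case Eb: (bit j m); case Eb': (bit j m') => // _.
  by rewrite -(bx_disj1 d0 E Ec C1 Eb Eb'); split; [apply: hsub h1|apply: hsub h2].
have E' := esym E; have Ec' := esym Ec; rewrite Ec in C1.
by rewrite -(bx_disj1 d0 E' Ec' C1 Eb' Eb); split; [apply: hsub h2|apply: hsub h1].
Qed.


Lemma cut_step (R : realType) (a b lo lam g w C U : R) :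
  0 <= a - lo <= g -> 0 <= b - lo - lam <= g -> g <= lam * w -> 0 < lam -> 0 < w ->
  a <= b -> 2 <= C -> 1 < (C + 1) * w -> C <= 2 * U -> 2 * U <= C + 1 ->
  0 <= a + (b - a) * (U / C) - (lo + lam / 2) <= 2 * (lam * w).
Proof.
move=> /andP[e0 e1] /andP[f0 f1] glw lam0 w0 ab C2 Cw U1 U2.
have C0 : 0 < C by lra.
set del := U / C - 2^-1.
have Ed : U / C = del + 2^-1 by rewrite /del subrK.
have d0 : 0 <= del.
  rewrite /del subr_ge0 ler_pdivlMr //; lra.
have d1 : del * (2 * C) <= 1.
  have -> : del * (2 * C) = 2 * U - C by rewrite /del; field; rewrite gt_eqF.
  lra.
have key : a + (b - a) * (U / C) - (lo + lam / 2) =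
   ((a - lo) + (b - lo - lam)) / 2 + (b - a) * del.
  by rewrite Ed; field.
rewrite key; apply/andP; split.
  apply: addr_ge0; first by apply: divr_ge0; lra.
  by apply: mulr_ge0 => //; lra.
have h1 : ((a - lo) + (b - lo - lam)) / 2 <= lam * w by lra.
have h2 : (b - a) * del <= (lam + lam * w) * del.
  by apply: ler_wpM2r => //; lra.
have h3 : (lam + lam * w) * del * (2 * C) <= (lam + lam * w).
  rewrite -mulrA; rewrite -[leRHS]mulr1; apply: ler_wpM2l => //.
  apply: addr_ge0; [lra|apply: mulr_ge0; lra].
have h4 : (lam + lam * w) <= lam * w * (2 * C).
  have : 1 + w <= w * (2 * C) by nra.
  move=> h; have := ler_wpM2l (ltW lam0) h; rewrite mulrDr mulr1 => h'.
  by rewrite -mulrA.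
have h5 : (lam + lam * w) * del <= lam * w.
  have hC : 0 < 2 * C by lra.
  rewrite -(ler_pM2r hC); lra.
lra.
Qed.

Definition nc (d l c : nat) : nat := count (fun j => j %% d == c)%N (iota 0 l).

Lemma nc_S (d l c : nat) : nc d l.+1 c = (nc d l c + (l %% d == c))%N.
Proof. by rewrite /nc -addn1 iotaD count_cat /= add0n addn0. Qed.

Lemma nc_mult (d l c n : nat) : (0 < d)%N -> (l %% d = c)%N ->
  (l <= n * d + c)%N -> (0 < n -> (n.-1) * d + c < l)%N -> n = (l %/ d)%N.
Proof.
move=> d0 E h1 h2.
have El : l = (l %/ d * d + c)%N by rewrite {1}(divn_eq l d) E.
move: El h1 h2; set q := (l %/ d)%N => El h1 h2.
apply/eqP; rewrite eqn_leq; apply/andP; split.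
  case: n h1 h2 => [|n] h1 h2; first by [].
  have := h2 isT => /= h.
  have : (n * d < q * d)%N by lia.
  by rewrite ltn_pmul2r.
have : (q * d <= n * d)%N by lia.
by rewrite leq_pmul2r.
Qed.

Lemma nc_bounds (d l c : nat) : (0 < d)%N -> (c < d)%N ->
  (l <= nc d l c * d + c)%N /\ (0 < nc d l c -> (nc d l c).-1 * d + c < l)%N.
Proof.
move=> d0 cd; elim: l => [|l [IH1 IH2]]; first by rewrite /nc /=.
rewrite nc_S; case: eqP => [E|E].
- have El : l = (l %/ d * d + c)%N by rewrite {1}(divn_eq l d) E.
  have -> := nc_mult d0 E IH1 IH2.
  rewrite addn1 /=; split; lia.
- rewrite addn0; split.
    have : l != (nc d l c * d + c)%N.
      apply/eqP => h; apply: E; rewrite h modnMDl modn_small //.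
    lia.
  move=> h; have := IH2 h; lia.
Qed.

Lemma nc_split (d l c : nat) : (0 < d)%N -> (c < d)%N -> (l %% d = c)%N ->
  (nc d l c * d + c)%N = l.
Proof.
move=> d0 cd E; have [h1 h2] := nc_bounds l d0 cd.
rewrite (nc_mult d0 E h1 h2).
by rewrite {2}(divn_eq l d) E.
Qed.

Definition Pm (R : realType) (d m c n : nat) : R :=
  \sum_(k < n) (bit (k * d + c) m)%:R / 2 ^+ k.+1.

Lemma Pm_S (R : realType) (d m c n : nat) :
  Pm R d m c n.+1 = Pm R d m c n + (bit (n * d + c) m)%:R / 2 ^+ n.+1.
Proof. by rewrite /Pm big_ord_recr. Qed.

Definition Gv (R : realType) (d N l c : nat) : R :=
  if nc d l c is n.+1 then 2 * 2 ^+ (n * (d - 1) + c) / N%:R else 0.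

Definition Inv (R : realType) (d N m l : nat) : Prop := forall c : 'I_d,
  0 <= (bx R d N m l).1 c - Pm R d m c (nc d l c) <= Gv R d N l c /\
  0 <= (bx R d N m l).2 c - Pm R d m c (nc d l c) - (2 ^+ (nc d l c))^-1 <= Gv R d N l c.

Lemma pow2R (R : realType) (k : nat) : (2 : R) ^+ k = (2 ^ k)%:R.
Proof. by rewrite natrX. Qed.

Lemma uphalf_bounds (C : nat) : (C <= 2 * uphalf C <= C.+1)%N.
Proof.
rewrite uphalf_half; move: (odd_double_half C); set h := C./2.
by case: (odd C) => /= E; rewrite -addnn in E; apply/andP; split; lia.
Qed.

Lemma natA (n c d : nat) : (0 < d)%N -> (n * d + c = n * (d - 1) + c + n)%N.
Proof.
move=> d0; rewrite mulnBr muln1; have : (n <= n * d)%N by rewrite leq_pmulr.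
lia.
Qed.

Lemma natB (n c d : nat) : (n.+1 * (d - 1) + c = (n * (d - 1) + c) + (d - 1))%N.
Proof. rewrite mulSn; lia. Qed.

Lemma natC (d : nat) : (1 < d)%N -> (2 <= 2 ^ (d - 1))%N.
Proof. by move=> d1; rewrite -[X in (X <= _)%N]expn1 leq_pexp2l //; lia. Qed.

Lemma inv_all (R : realType) (d N m : nat) : (1 < d)%N -> (m < N)%N ->
  forall l, (forall j, (j < l)%N -> (1 < cntm N m j)%N) -> Inv R d N m l.
Proof.
move=> d1 mN; have d0 : (0 < d)%N by apply: ltnW.
have N0 : (0 < N)%N by apply: (leq_ltn_trans _ mN).
have NR : 0 < N%:R :> R by rewrite ltr0n.
elim => [|l IH] H.
  move=> c; rewrite /= /nc /= /Pm /Gv /= big_ord0 expr0 invr1 !subr0 subrr lexx.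
  by [].
have IHl := IH (fun j jl => H j (ltnW jl)).
have C1 := H l (ltnSn l).
move=> c; have [v1 [v2 v3]] := bx_valid R N m l c.
move: IHl v1 v2 v3; rewrite /Inv /=; rewrite C1.
move: (bx R d N m l) => [a b] /= IHl v1 v2 v3.
have [IHa IHb] := IHl c.
rewrite /Gv nc_S.
case: eqP => [Ec|Ec]; last first.
  have Ec' : (nat_of_ord c == (l %% d)%N) = false.
    by apply/negbTE/eqP => h; apply: Ec; rewrite h.
  rewrite addn0; case: (bit l m) => /=; rewrite Ec' -/(Gv R d N l c).
  1-2: exact: (conj IHa IHb).
set n := nc d l c.
have Hl : (n * d + c)%N = l by apply: nc_split => //; rewrite Ec.
set C := cntm N m l.
have [C2 CU1 CU2 Cw] : [/\ 2 <= C%:R :> R, C%:R <= 2 * (uphalf C)%:R :> R,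
    2 * (uphalf C)%:R <= C%:R + 1 :> R & 1 < (C%:R + 1) * ((2 ^+ l : R) / N%:R)].
  split.
  - by rewrite (ler_nat R 2).
  - by rewrite -natrM ler_nat; case/andP: (uphalf_bounds C).
  - by rewrite -natrM natr1 ler_nat; case/andP: (uphalf_bounds C).
  - rewrite mulrA ltr_pdivlMr // mul1r pow2R natr1 -natrM ltr_nat.
    by have := cntm_big l mN; rewrite -/C mulSn addnC mulnC.
set lam : R := (2 ^+ n)^-1.
set K : R := 2 ^+ (n * (d - 1) + c).
have lam0 : 0 < lam by rewrite invr_gt0 exprn_gt0.
have Elw : lam * ((2 ^+ l : R) / N%:R) = K / N%:R.
  rewrite -Hl /lam /K mulrA; congr (_ / _).
  rewrite (natA n c d0).
  by rewrite exprD mulrC -mulrA mulfV ?mulr1 // expf_neq0.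
have w0 : 0 < (2 ^+ l : R) / N%:R by rewrite divr_gt0 // exprn_gt0.
have Gle : Gv R d N l c <= K / N%:R.
  rewrite /Gv -/n /K; case En: n => [|n']; first by rewrite divr_ge0 // exprn_ge0.
  rewrite ler_pM2r ?invr_gt0 //.
  rewrite natB.
  rewrite [X in _ <= X]exprD [X in X <= _]mulrC ler_pM2l ?exprn_gt0 //.
  have := natC d1.
  by rewrite pow2R (ler_nat R 2).
rewrite -Elw in Gle.
have cs := cut_step (a := a c) (b := b c) IHa IHb Gle lam0 w0 v2 C2 Cw CU1 CU2.
have Pn := Pm_S R d m c n; rewrite Hl in Pn.
have lam2 : (2 ^+ n.+1 : R)^-1 = lam / 2 by rewrite exprS invfM mulrC.
have G' : (2 * 2 ^+ (n * (d - 1) + c) / N%:R : R) = 2 * (lam * ((2 ^+ l : R) / N%:R)).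
  by rewrite Elw /K mulrA.
have Ent : (n + true)%N = n.+1 by rewrite addn1.
have Hc : (nat_of_ord c == (l %% d)%N) = true by rewrite Ec eqxx.
rewrite Ent.
have gw : Gv R d N l c <= 2 * (lam * (2 ^+ l / N%:R)).
  apply: (le_trans Gle); rewrite ler_pMl //; [lra| by rewrite mulr_gt0].
rewrite G' lam2 Pn.
move: IHa IHb cs gw.
rewrite -/n -/lam.
set g := Gv R d N l c; set W := lam * (2 ^+ l / N%:R); set t := _ + _ * _.
set lo := Pm R d m c n.
case: (bit l m) => /=; rewrite Hc ?mul1r ?mul0r ?addr0 ?lam2 -/t => IHa IHb cs gw.
  move: IHb cs => /andP[h1 h2] /andP[h3 h4].
  split; apply/andP; split; lra.
move: IHa cs => /andP[h1 h2] /andP[h3 h4].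
split; apply/andP; split; lra.
Qed.


Lemma tnth_dig (R : realType) (d m : nat) (c : 'I_d) :
  tnth (digital_seq R d m.+1) c = Pm R d m c m.+1.
Proof.
rewrite /digital_seq (tnth_nth 0) /= (nth_map 0) ?size_iota // nth_iota // add0n.
by apply: eq_bigr => k _; rewrite eps_digit.
Qed.

Lemma Pm_mono (R : realType) (d m c n K : nat) :
  Pm R d m c n <= Pm R d m c (n + K) <=
  Pm R d m c n + (2 ^+ n)^-1 - (2 ^+ (n + K))^-1.
Proof.
elim: K => [|K IH]; first by rewrite addn0 addrK lexx.
rewrite addnS Pm_S.
have e : (2 ^+ (n + K).+1 : R)^-1 = (2 ^+ (n + K))^-1 / 2 by rewrite exprS invfM mulrC.
have p0 : 0 < (2 ^+ (n + K) : R)^-1 by rewrite invr_gt0 exprn_gt0.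
have b01 : 0 <= (bit ((n + K) * d + c) m)%:R :> R /\ (bit ((n + K) * d + c) m)%:R <= 1 :> R.
  by case: (bit _ _).
move: IH b01; rewrite e; set P0 := Pm _ _ _ _ n; set P1 := Pm _ _ _ _ (n + K).
set q := (2 ^+ (n + K))^-1; set bb := (bit _ _)%:R.
move=> /andP[h1 h2] [b0 b1].
have : 0 <= bb * (q / 2) <= q / 2.
  rewrite mulr_ge0 ?divr_ge0 ?(ltW p0) //= -[X in _ <= X]mul1r ler_wpM2r //.
  by rewrite divr_ge0 // ltW.
move=> /andP[h3 h4]; apply/andP; split; lra.
Qed.

Lemma Pm_stable (R : realType) (d m c K : nat) : (0 < d)%N ->
  Pm R d m c (m.+1 + K) = Pm R d m c m.+1.
Proof.
move=> d0; elim: K => [|K IH]; first by rewrite addn0.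
rewrite addnS Pm_S IH bit_small ?mul0r ?addr0 //.
apply: (leq_trans (ltn_expl m (isT : (1 < 2)%N))).
rewrite leq_pexp2l //; apply: (leq_trans _ (leq_addr _ _)).
apply: (leq_trans _ (leq_pmulr _ d0)); lia.
Qed.

Lemma x_bounds (R : realType) (d m : nat) (c : 'I_d) (n : nat) : (0 < d)%N ->
  Pm R d m c n <= tnth (digital_seq R d m.+1) c <= Pm R d m c n + (2 ^+ n)^-1.
Proof.
move=> d0; rewrite tnth_dig.
have [nm|mn] := leqP n m.+1.
  have := Pm_mono R d m c n (m.+1 - n); rewrite subnKC //.
  have : 0 <= (2 ^+ m.+1 : R)^-1 by rewrite invr_ge0 exprn_ge0.
  move=> h /andP[h1 h2]; apply/andP; split; lra.
have -> : Pm R d m c m.+1 = Pm R d m c n.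
  by rewrite -(subnKC (ltnW mn)) Pm_stable.
by rewrite lexx lerDl invr_ge0 exprn_ge0.
Qed.


Lemma final_real (R : realType) (d : nat) (A t : R) : (0 < d)%N ->
  0 < A -> 0 < t -> t < 4 -> A <= 2 ^+ d -> A * t <= 2 -> A * (1 + t) ^+ d <= 6 ^+ d.
Proof.
move=> d0 A0 t0 t4 A2 At.
have e6 : (6 : R) ^+ d = 2 ^+ d * 3 ^+ d by rewrite -exprMn; congr (_ ^+ _); lra.
have p2 : 2 <= (2 : R) ^+ d.
  by rewrite -[X in X <= _]expr1 ler_eXn2l //; lra.
have [t2|t2] := leP 2 t.
  have A1 : A <= 1.
    have : A * 2 <= A * t by rewrite ler_wpM2l // ltW.
    lra.
  have h : (1 + t) ^+ d <= 6 ^+ d by apply: lerXn2r; rewrite ?nnegrE; lra.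
  rewrite -[X in _ <= X]mul1r; apply: ler_pM; [lra | apply: exprn_ge0; lra | lra | exact: h].
have [t1|t1] := leP 1 t.
  have A1 : A <= 2.
    have : A * 1 <= A * t by rewrite ler_wpM2l // ltW.
    lra.
  have h : (1 + t) ^+ d <= 3 ^+ d by apply: lerXn2r; rewrite ?nnegrE; lra.
  rewrite e6; apply: ler_pM; [lra | apply: exprn_ge0; lra | lra | exact: h].
have h : (1 + t) ^+ d <= 2 ^+ d by apply: lerXn2r; rewrite ?nnegrE; lra.
have h3 : (2 : R) ^+ d <= 3 ^+ d by apply: lerXn2r; rewrite ?nnegrE; lra.
rewrite e6; apply: ler_pM; [lra | apply: exprn_ge0; lra | lra | lra].
Qed.

Lemma final_num (R : realType) (d N n c lf : nat) : (1 < d)%N -> (c < d)%N -> (0 < N)%N ->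
  (N < 2 ^ lf.+1)%N -> (lf <= n * d + c)%N -> (0 < n -> 2 ^ (n.-1 * d + c) < N)%N ->
  N%:R * ((2 ^+ n)^-1 +
    (if n is n'.+1 then 2 * 2 ^+ (n' * (d - 1) + c) / N%:R else 0)) ^+ d <= 6 ^+ d :> R.
Proof.
move=> d1 cd N0 Nlf lfn hX.
have d0 : (0 < d)%N by apply: ltnW.
have NR : 0 < N%:R :> R by rewrite ltr0n.
case: n lfn hX => [|n'] lfn hX.
  rewrite expr0 invr1 addr0 expr1n mulr1 -(natrX R 6) ler_nat.
  apply: (leq_trans (ltnW Nlf)); apply: (@leq_trans (2 ^ d)).
    by rewrite leq_pexp2l //; rewrite mul0n add0n in lfn; lia.
  by rewrite leq_exp2r.
have hX' := hX isT; rewrite /= in hX'.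
set X := (2 ^ (n' * d + c))%N in hX'.
set lam : R := (2 ^+ n'.+1)^-1.
set t : R := 4 * X%:R / N%:R.
set A : R := N%:R / 2 ^+ (n'.+1 * d).
have eX : X%:R = (2 ^+ (n' * (d - 1) + c) : R) * 2 ^+ n'.
  by rewrite /X natrX -exprD -natA.
have eG : lam + 2 * 2 ^+ (n' * (d - 1) + c) / N%:R = lam * (1 + t).
  rewrite /t eX /lam exprS; field.
  by rewrite !expf_neq0 // gt_eqF.
have eA : N%:R * (lam * (1 + t)) ^+ d = A * (1 + t) ^+ d.
  by rewrite exprMn mulrA /A /lam exprVn -exprM.
rewrite eG eA; apply: final_real => //.
- by rewrite /A divr_gt0 // exprn_gt0.
- by rewrite /t mulr_gt0 // ?invr_gt0 // mulr_gt0 // ltr0n expn_gt0.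
- by rewrite /t ltr_pdivrMr // ltr_pM2l // ltr_nat.
- rewrite /A ler_pdivrMr ?exprn_gt0 // -exprD -(natrX R 2) ler_nat.
  apply: (leq_trans (ltnW Nlf)); rewrite leq_pexp2l //; lia.
- rewrite /A /t.
  have -> : N%:R / 2 ^+ (n'.+1 * d) * (4 * X%:R / N%:R) = 4 * X%:R / 2 ^+ (n'.+1 * d) :> R.
    by field; rewrite expf_neq0 // gt_eqF.
  rewrite ler_pdivrMr ?exprn_gt0 // /X natrX.
  have -> : (n'.+1 * d = n' * d + c + (d - c))%N by rewrite mulSn; lia.
  rewrite [X in _ <= 2 * X]exprD.
  have : (2 : R) <= 2 ^+ (d - c).
    by rewrite -[X in X <= _]expr1 ler_eXn2l //; [lia|lra].
  have : (0 : R) <= 2 ^+ (n' * d + c) by rewrite exprn_ge0.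
  move: (2 ^+ (n' * d + c) : R) (2 ^+ (d - c) : R) => P Q hP hQ.
  nra.
Qed.


Lemma powM_d (R : realType) (d N : nat) : (0 < d)%N -> (0 < N)%N ->
  (N%:R `^ (- (d%:R^-1)) : R) ^+ d = N%:R^-1.
Proof.
move=> d0 N0.
rewrite -powR_mulrn ?powR_ge0 // -powRrM mulNr mulVf ?pnatr_eq0 -?lt0n //.
by rewrite powR_inv1 // ler0n.
Qed.

Lemma root_bound (R : realType) (d N : nat) (D : R) : (0 < d)%N -> (0 < N)%N ->
  0 <= D -> N%:R * D ^+ d <= 6 ^+ d -> D <= 6 * N%:R `^ (- (d%:R^-1)).
Proof.
move=> d0 N0 D0 H.
have NR : 0 < N%:R :> R by rewrite ltr0n.
rewrite -(ler_pXn2r d0) ?nnegrE ?mulr_ge0 ?powR_ge0 //.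
by rewrite exprMn powM_d // ler_pdivlMr // mulrC.
Qed.

Lemma coord_bound (R : realType) (d N m : nat) : (1 < d)%N -> (m < N)%N ->
  forall y, hbox (bx R d N m N).1 (bx R d N m N).2 y ->
  forall c : 'I_d, `|tnth y c - tnth (digital_seq R d m.+1) c| <= 6 * N%:R `^ (- (d%:R^-1)).
Proof.
move=> d1 mN y Hy c.
have d0 : (0 < d)%N by apply: ltnW.
have N0 : (0 < N)%N by apply: (leq_ltn_trans _ mN).
have exP : exists l, (cntm N m l <= 1)%N by exists N; rewrite cntm_N.
case: (ex_minnP exP) => lf Plf minlf.
have act : forall j, (j < lf)%N -> (1 < cntm N m j)%N.
  move=> j jl; rewrite ltnNge; apply/negP => h; have := minlf j h.
  by rewrite leqNgt jl.
have lfN : (lf <= N)%N by apply: minlf; rewrite cntm_N.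
have Ebx : bx R d N m N = bx R d N m lf.
  by have := @bx_frozen R d N m lf mN Plf (N - lf); rewrite subnKC.
rewrite Ebx in Hy.
have [ia ib] := @inv_all R d N m d1 mN lf act c.
move/andP: ia => [ia1 ia2]; move/andP: ib => [ib1 ib2].
have /andP[x1 x2] := x_bounds R m c (nc d lf c) d0.
have /andP[y1 y2] := Hy c.
set n := nc d lf c in ia1 ia2 ib1 ib2 x1 x2.
set D := (2 ^+ n)^-1 + Gv R d N lf c.
have hD : `|tnth y c - tnth (digital_seq R d m.+1) c| <= D.
  rewrite ler_norml; apply/andP; split.
    have : 0 <= Gv R d N lf c by lra.
    rewrite /D; lra.
  rewrite /D; lra.
apply: (le_trans hD); apply: root_bound => //.
  by apply: (le_trans _ hD).
have [h1 h2] := nc_bounds lf d0 (ltn_ord c).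
rewrite /D /Gv -/n.
apply: (@final_num R d N n c lf) => //.
- by apply: (cntm_le1 mN).
- move=> n0; apply: (cntm_ge2 (m := m)) => //; apply: act; exact: h2.
Qed.


Lemma bigsetU_mem (T : Type) (I : eqType) (r : seq I) (F : I -> set T) (x : T) :
  (\big[setU/set0]_(i <- r) F i) x <-> exists2 i, i \in r & F i x.
Proof.
elim: r => [|i r IH]; first by rewrite big_nil; split => // [[i]].
rewrite big_cons; split.
  case => [h|/IH [j jr h]]; first by exists i; rewrite ?mem_head.
  by exists j; rewrite // in_cons jr orbT.
move=> [j]; rewrite in_cons => /orP [/eqP -> h|jr h]; first by left.
by right; apply/IH; exists j.
Qed.

Lemma bigcup_ord (T : Type) (N : nat) (F : 'I_N -> set T) :
  \bigcup_(n in [set: 'I_N]) F n = \big[setU/set0]_(i < N) F i.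
Proof.
apply/seteqP; split => x.
  by move=> [i _ h]; apply/bigsetU_mem; exists i; rewrite ?mem_index_enum.
by move/bigsetU_mem => [i _ h]; exists i.
Qed.

Lemma cball_of (R : realType) (d : nat) (y c : d.-tuple R) (M : R) :
  0 <= M -> (forall i : 'I_d, `|tnth y i - tnth c i| <= 6 * M) ->
  cball c (6 * Num.sqrt d%:R * M) y.
Proof.
move=> M0 H; rewrite /cball /=.
have h : \sum_(i < d) (tnth y i - tnth c i) ^+ 2 <= \sum_(i < d) (6 * M) ^+ 2.
  apply: ler_sum => i _; rewrite -real_normK ?num_real //.
  apply: lerXn2r; rewrite ?nnegrE ?normr_ge0 ?mulr_ge0 //.
apply: (le_trans (ler_wsqrtr h)).
rewrite sumr_const card_ord -[_ *+ d]mulr_natl sqrtrM ?ler0n // sqrtr_sqr.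
by rewrite ger0_norm ?mulr_ge0 // mulrA (mulrC 6).
Qed.

Theorem theorem1p2 (R : realType) (d : nat)
    (mu : {measure set (d.-tuple R) -> \bar R}) :
  (2 <= d)%N -> is_lebesgue_d mu ->
  forall N : nat, (0 < N)%N ->
  exists A : 'I_N -> set (d.-tuple R),
    (forall n, measurable (A n)) /\
    (forall n m, n != m -> A n `&` A m = set0) /\
    (forall n, A n `<=` cube R d) /\
    (forall n : 'I_N, mu (A n) = (N%:R^-1)%:E) /\
    (forall n : 'I_N,
       A n `<=` cball (digital_seq R d n.+1)
                  (6 * Num.sqrt d%:R * N%:R `^ (- (d%:R^-1)))) /\
    mu (cube R d `\` \bigcup_(n in [set: 'I_N]) A n) = 0%E.
Proof.
move=> d2 Hmu N N0.
have d0 : (0 < d)%N by apply: ltnW.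
have NR : 0 < N%:R :> R by rewrite ltr0n.
pose A (n : 'I_N) := hbox (bx R d N n N).1 (bx R d N n N).2.
have mA : forall n, measurable (A n) by move=> n; apply: hbox_measurable.
have muA : forall n : 'I_N, mu (A n) = (N%:R^-1)%:E.
  move=> n; rewrite /A hbox_measure //; last by move=> i; case: (bx_valid R N n N i) => _ [].
  by rewrite bx_vol // ?cntm_N // div1r.
have disA : forall n m : 'I_N, n != m -> A n `&` A m = set0.
  by move=> n m nm; apply: bx_disj.
exists A; split => //; split => //; split.
  move=> n y Hy i; have /andP[h1 h2] := Hy i.
  have [v1 [v2 v3]] := bx_valid R N n N i.
  by apply/andP; split; [apply: (le_trans v1 h1)|apply: (le_trans (ltW h2) v3)].
split => //; split.
  move=> n y Hy; apply: cball_of; first by rewrite powR_ge0.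
  by move=> i; apply: (coord_bound d2 (ltn_ord n) Hy).
have cubeE : cube R d = box (fun _ => 0) (fun _ => 1) by [].
have mcube : mu (cube R d) = 1%E.
  by rewrite cubeE Hmu // big1 // => i _; rewrite subr0.
set U := \bigcup_(n in [set: 'I_N]) A n.
have UE : U = \big[setU/set0]_(i < N) A i by apply: bigcup_ord.
have mU : measurable U by rewrite UE; apply: bigsetU_measurable.
have triv : trivIset [set: 'I_N] A.
  move=> i j _ _ [x hx]; apply/eqP; apply/negPn/negP => ij.
  by rewrite disA in hx.
have muU : mu U = 1%E.
  have E : mu (\big[setU/set0]_(i < N) A i) = \sum_(i < N) mu (A i)
    := measure_semi_additive_ord mu mA triv (bigsetU_measurable _ (fun i _ => mA i)).
  rewrite UE E (eq_bigr (fun _ => (N%:R^-1)%:E)); last by move=> i _; rewrite muA.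
  rewrite sumEFin sumr_const card_ord -[_ *+ N]mulr_natl divff //.
  by rewrite gt_eqF.
have Usub : U `<=` cube R d.
  move=> y [n _ Hy] i; have /andP[h1 h2] := Hy i.
  have [v1 [v2 v3]] := bx_valid R N n N i.
  by apply/andP; split; [apply: (le_trans v1 h1)|apply: (le_trans (ltW h2) v3)].
have mC : measurable (cube R d) by rewrite cubeE; apply: box_measurable.
have fin : (mu (cube R d) < +oo)%E by rewrite mcube ltry.
have E : mu (cube R d `\` U) = (mu (cube R d) - mu (cube R d `&` U))%E
  := measureD mC mU fin.
rewrite E setIidr // muU mcube subee //.
Qed.
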